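(* Let $m,n\in\mathbb{N}$, $A\in\mathcal{A}(\bm{p})^{m\times n}$ and $b\in\mathcal{A}(\bm{p})^{m\times1}$. The following are equivalent: (1) there exists $x\in\mathcal{A}(\bm{p})^{n\times1}$ with $A\ast x=b$; (2) there exists $\delta>0$ such that for all $k\in\mathbb{N}_0$ and all $y\in\mathbb{C}^{m\times1}$, $\|(\widehat A(k))^*y\|_2\ge\delta\,|\langle y,\widehat b(k)\rangle_2|$.
   Context: Fix $\bm{p}:\mathbb{N}_0\to(0,\infty)$ with $\lim_{n\to\infty}\bm{p}(n)^{1/n}=\infty$. For an entire function $f$ write $f(z)=\sum_{n\ge0}\widehat f(n)z^n$. $\mathcal{A}(\bm{p})$ is the set of entire functions $f$ with $\sup_{n\ge 0}\bm{p}(n)|\widehat f(n)|<\infty$, with pointwise addition and scalar multiplication and the weighted Hadamard product $(f\ast g)(z)=\sum_{n\ge0}\bm{p}(n)\widehat f(n)\widehat g(n)z^n$. Matrix products of matrices over $\mathcal{A}(\bm{p})$ use $\ast$ for entrywise multiplication. For a matrix $A=[a_{ij}]$ with entries in $\mathcal{A}(\bm{p})$ and $k\in\mathbb{N}_0$, $\widehat A(k)$ is the complex matrix $[\widehat{a_{ij}}(k)]$. $\langle\cdot,\cdot\rangle_2$ is the Euclidean inner product on $\mathbb{C}^{m\times 1}$, $\|\cdot\|_2$ the Euclidean norm, and $M^*$ the conjugate transpose of a complex matrix $M$. *)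

(* Defs.v *)
From HB Require Import structures.
From mathcomp Require Import all_boot all_order all_algebra.
From mathcomp Require Import all_classical all_reals all_analysis.
From mathcomp Require Import complex.
Set Implicit Arguments. Unset Strict Implicit. Unset Printing Implicit Defensive.
Import Order.TTheory GRing.Theory Num.Theory.
Local Open Scope ring_scope.
Local Open Scope complex_scope.

Definition cabs (R : realType) (z : R[i]) : R := ComplexField.Normc.normc z.

(* An element f of A(p) is represented by its Taylor coefficient sequence
   n |-> \hat f(n); membership = weighted boundedness of the coefficients.
   (This condition together with p(n)^(1/n) -> oo forces the power series
   to be entire.) *)
Definition inA (R : realType) (p : nat -> R) (f : nat -> R[i]) : Prop :=
  exists M : R, forall k : nat, p k * cabs (f k) <= M.

Definition wprod (R : realType) (p : nat -> R) (f g : nat -> R[i]) : nat -> R[i] :=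
  fun k => (p k)%:C *  f k * g k.

(* matrix product over A(p), with [*] as entrywise multiplication *)
Definition wmulmx (R : realType) (p : nat -> R) (m n l : nat)
  (A : 'M[nat -> R[i]]_(m, n)) (B : 'M[nat -> R[i]]_(n, l)) : 'M[nat -> R[i]]_(m, l) :=
  \matrix_(i < m, j < l) (fun k => \sum_(r < n) wprod p (A i r) (B r j) k).

Definition hatmx (R : realType) (m n : nat) (A : 'M[nat -> R[i]]_(m, n)) (k : nat)
  : 'M[R[i]]_(m, n) := \matrix_(i < m, j < n) A i j k.

Definition adjmx (R : realType) (m n : nat) (M : 'M[R[i]]_(m, n)) : 'M[R[i]]_(n, m) :=
  map_mx (@conjc R) M^T.

Definition inner2 (R : realType) (m : nat) (y b : 'cV[R[i]]_m) : R[i] :=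
  \sum_(i < m) y i 0 * (b i 0)^*.

Definition norm2 (R : realType) (m : nat) (y : 'cV[R[i]]_m) : R :=
  Num.sqrt (\sum_(i < m) cabs (y i 0) ^+ 2).

(* Main.v *)
Require Import Defs.
From HB Require Import structures.
From mathcomp Require Import all_boot all_order all_algebra.
From mathcomp Require Import all_classical all_reals all_analysis.
From mathcomp Require Import complex.
From mathcomp Require Import ring lra.
Import Order.TTheory GRing.Theory Num.Theory.
Local Open Scope classical_set_scope.
Local Open Scope ring_scope.
Local Open Scope complex_scope.
Set Implicit Arguments. Unset Strict Implicit.
Section S.
Context {R : realType}.
Implicit Types z : R[i].
Lemma cabs_ge0 z : 0 <= cabs z.
Proof. by case: z => a b; rewrite /cabs /= sqrtr_ge0. Qed.
Lemma cabs_conj z : cabs z^* = cabs z.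
Proof. by case: z => a b; rewrite /cabs /= sqrrN. Qed.
Lemma cabs_real (r : R) : cabs r%:C = `|r|.
Proof. by rewrite /cabs /= expr0n /= addr0 sqrtr_sqr. Qed.
Lemma cabs_sq z : ((cabs z)^+2)%:C = z^* * z.
Proof.
case: z => a b; rewrite /cabs /= sqr_sqrtr ?addr_ge0 ?sqr_ge0 //.
simpc. apply/eqP; rewrite eq_complex /=; apply/andP; split; apply/eqP.
  by rewrite !expr2.
by rewrite mulrC subrr.
Qed.
Lemma cabsM z1 z2 : cabs (z1 * z2) = cabs z1 * cabs z2.
Proof. exact: ComplexField.Normc.normcM. Qed.
Lemma cabsV z : cabs (z^-1) = (cabs z)^-1.
Proof. exact: ComplexField.Normc.normcV. Qed.
Lemma cabs_eq0 z : cabs z = 0 -> z = 0.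
Proof. exact: ComplexField.Normc.eq0_normc. Qed.
Lemma cabs_sum (I : Type) (r : seq I) (P : pred I) (F : I -> R[i]) :
  cabs (\sum_(i <- r | P i) F i) <= \sum_(i <- r | P i) cabs (F i).
Proof.
apply: (big_ind2 (fun a b => cabs a <= b)) => //.
  by rewrite /cabs ComplexField.Normc.normc0.
move=> a1 a2 b1 b2 h1 h2; apply: le_trans (le_normcD _ _) _.
exact: lerD.
Qed.

Lemma norm2_ge0 m (y : 'cV[R[i]]_m) : 0 <= norm2 y.
Proof. exact: sqrtr_ge0. Qed.
Lemma norm2_sq m (y : 'cV[R[i]]_m) : norm2 y ^+ 2 = \sum_(i < m) cabs (y i 0) ^+ 2.
Proof. by rewrite /norm2 sqr_sqrtr // sumr_ge0 // => i _; rewrite sqr_ge0. Qed.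
Lemma adjmxE m n (M : 'M[R[i]]_(m, n)) i j : adjmx M i j = (M j i)^*.
Proof. by rewrite /adjmx !mxE. Qed.
Lemma norm2_sqC m (y : 'cV[R[i]]_m) : (norm2 y ^+ 2)%:C = (adjmx y *m y) 0 0.
Proof.
rewrite norm2_sq rmorph_sum mxE; apply: eq_bigr => i _.
by rewrite adjmxE -cabs_sq.
Qed.
Lemma entry_le_norm2 m (y : 'cV[R[i]]_m) i : cabs (y i 0) <= norm2 y.
Proof.
rewrite -(ger0_norm (cabs_ge0 (y i 0))) -sqrtr_sqr /norm2.
rewrite ler_sqrt ?sumr_ge0 // => [|j _]; last by rewrite sqr_ge0.
by rewrite (bigD1 i) //= lerDl sumr_ge0 // => j _; rewrite sqr_ge0.
Qed.
Lemma adjmxM m n l (A : 'M[R[i]]_(m, n)) (B : 'M[R[i]]_(n, l)) :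
  adjmx (A *m B) = adjmx B *m adjmx A.
Proof. by rewrite /adjmx trmx_mul map_mxM. Qed.
Lemma adjmxK m n (A : 'M[R[i]]_(m, n)) : adjmx (adjmx A) = A.
Proof. by apply/matrixP => i j; rewrite !adjmxE conjcK. Qed.
Lemma inner2E m (y b : 'cV[R[i]]_m) : inner2 y b = (adjmx b *m y) 0 0.
Proof. by rewrite /inner2 mxE; apply: eq_bigr => i _; rewrite adjmxE mulrC. Qed.
Lemma conjcM (a c : R[i]) : conjc (a * c) = conjc a * conjc c.
Proof. exact: rmorphM. Qed.
Lemma conjc_sum (I : Type) (r : seq I) (P : pred I) (F : I -> R[i]) :
  conjc (\sum_(i <- r | P i) F i) = \sum_(i <- r | P i) conjc (F i).
Proof. exact: rmorph_sum. Qed.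
Lemma inner2_conjc m (y b : 'cV[R[i]]_m) :
  inner2 y b = \sum_(i < m) y i 0 * conjc (b i 0).
Proof. reflexivity. Qed.
End S.

Unset Implicit Arguments.
Set Strict Implicit.

Lemma key (R : realType) m n (M : 'M[R[i]]_(m,n)) (bb : 'cV[R[i]]_m) (d : R) : 0 < d ->
 (forall y, d * cabs (inner2 y bb) <= norm2 (adjmx M *m y)) ->
 exists z : 'cV[R[i]]_n, M *m z = bb /\ forall j, cabs (z j 0) <= d^-1.
Proof.
move=> d0 H.
set G := M *m adjmx M.
have GT : adjmx G = G by rewrite /G adjmxM adjmxK.
set C := cokermx G^T.
have hC : G^T *m C = 0 := mulmx_coker _.
have hY : G *m map_mx conjc C = 0.
  have := congr1 (map_mx conjc) hC.
  by rewrite map_mxM map_mx0 -[map_mx _ G^T]/(adjmx G) GT.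
have hb : bb^T *m C = 0.
  apply/matrixP => a j; rewrite (ord1 a) !mxE.
  pose y : 'cV[R[i]]_m := \matrix_(i < m, _ < 1) (C i j)^*.
  have Gy : G *m y = 0.
    apply/matrixP => a' b'; rewrite [RHS]mxE.
    transitivity ((G *m map_mx conjc C) a' j); last by rewrite hY mxE.
    by rewrite !mxE; apply: eq_bigr => i _; rewrite !mxE.
  have Mu : M *m (adjmx M *m y) = 0 by rewrite mulmxA.
  have E : adjmx (adjmx M *m y) *m (adjmx M *m y) = 0.
    by rewrite adjmxM adjmxK -mulmxA Mu mulmx0.
  have nu : norm2 (adjmx M *m y) = 0.
    have := norm2_sqC (adjmx M *m y); rewrite E mxE => /eqP.
    by rewrite fmorph_eq0 expf_eq0 /= => /eqP.
  have := H y; rewrite nu pmulr_rle0 // => hle.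
  have /cabs_eq0 hi : cabs (inner2 y bb) = 0 by apply/le_anti; rewrite hle cabs_ge0.
  have : (\sum_i bb i 0 * C i j)^* = 0.
    rewrite rmorph_sum -[RHS]hi; apply: eq_bigr => i _.
    by rewrite rmorphM !mxE mulrC.
  move=> h; under eq_bigr do rewrite mxE.
  by rewrite -[LHS]conjcK h conjc0.
have : (bb^T <= G^T)%MS by rewrite submxE hb.
case/submxP => w' hw.
set w := w'^T.
have Mz : M *m (adjmx M *m w) = bb.
  by rewrite mulmxA -/G -[bb]trmxK hw trmx_mul trmxK.
exists (adjmx M *m w); split => //.
have E1 : adjmx (adjmx M *m w) *m (adjmx M *m w) = adjmx w *m bb.
  by rewrite adjmxM adjmxK -mulmxA Mz.
have E2 : (norm2 (adjmx M *m w) ^+ 2)%:C = (inner2 w bb)^*.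
  rewrite norm2_sqC E1 /inner2 rmorph_sum mxE; apply: eq_bigr => i _.
  by rewrite adjmxE rmorphM /= conjcK.
have E3 : norm2 (adjmx M *m w) ^+ 2 = cabs (inner2 w bb).
  have := congr1 (@cabs R) E2.
  by rewrite cabs_conj cabs_real ger0_norm // sqr_ge0.
have hn : norm2 (adjmx M *m w) <= d^-1.
  have h1 := H w; rewrite -E3 in h1.
  have n0 := norm2_ge0 (adjmx M *m w).
  move: h1 n0; set t := norm2 _ => h1 n0.
  have [->|tp] := eqVneq t 0; first by rewrite invr_ge0 ltW.
  have tpos : 0 < t by rewrite lt_def tp n0.
  rewrite -(ler_pM2l d0) mulrV ?unitfE ?gt_eqF //.
  rewrite expr2 mulrA in h1.
  by rewrite -(ler_pM2r tpos) mul1r.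
by move=> j; apply: le_trans (entry_le_norm2 _ _) hn.
Qed.

Theorem mainTheorem12 (R : realType) (p : nat -> R)
  (p_pos : forall k, 0 < p k)
  (p_growth : (fun k : nat => p k `^ (k%:R)^-1) @ \oo --> +oo%R)
  (m n : nat) (m_pos : (0 < m)%N) (n_pos : (0 < n)%N)
  (A : 'M[nat -> R[i]]_(m, n)) (b : 'M[nat -> R[i]]_(m, 1))
  (hA : forall i j, inA p (A i j)) (hb : forall i j, inA p (b i j)) :
  (exists x : 'M[nat -> R[i]]_(n, 1),
      (forall i j, inA p (x i j)) /\ wmulmx p A x = b)
  <->
  (exists delta : R, 0 < delta /\
     forall (k : nat) (y : 'cV[R[i]]_m),
       delta * cabs (inner2 y (hatmx b k)) <= norm2 (adjmx (hatmx A k) *m y)).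
Proof.
have pC k : (p k)%:C != 0 by rewrite fmorph_eq0 gt_eqF.
split.
  case=> x [hx hAx].
  have [Mf hM] := boolp.choice (fun j : 'I_n => hx j 0).
  set S := \sum_j Mf j.
  have M0 j : 0 <= Mf j.
    exact: le_trans (mulr_ge0 (ltW (p_pos 0%N)) (cabs_ge0 _)) (hM j 0%N).
  have S0 : 0 <= S by rewrite sumr_ge0.
  have S1 : 0 < 1 + S by lra.
  exists (1 + S)^-1; split; first by rewrite invr_gt0.
  move=> k y; set u := adjmx (hatmx A k) *m y.
  have hbk i : b i 0 k = \sum_r (p k)%:C * A i r k * x r 0 k.
    by rewrite -hAx /wmulmx mxE.
  have cr : ((p k)%:C)^* = (p k)%:C :> R[i] by exact: conjc_real.
  have hbk' i : y i 0 * conjc (hatmx b k i 0) =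
      \sum_r y i 0 * ((p k)%:C * conjc (A i r k) * conjc (x r 0 k)).
    by rewrite mxE hbk conjc_sum mulr_sumr; apply: eq_bigr => r _; rewrite !conjcM cr.
  have E : inner2 y (hatmx b k) = \sum_r u r 0 * ((p k)%:C * conjc (x r 0 k)).
    rewrite inner2_conjc (eq_bigr _ (fun i _ => hbk' i)) exchange_big.
    apply: eq_bigr => r _.
    rewrite /u mxE mulr_suml; apply: eq_bigr => i _.
    rewrite adjmxE !mxE; ring.
  have le1 : cabs (inner2 y (hatmx b k)) <= S * norm2 u.
    rewrite E; apply: le_trans (cabs_sum _ _ _) _.
    rewrite /S mulr_suml; apply: ler_sum => r _.
    rewrite !cabsM cabs_conj cabs_real gtr0_norm ?p_pos // mulrC.
    apply: ler_pM; [exact: mulr_ge0 (ltW (p_pos k)) (cabs_ge0 _) | exact: cabs_ge0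
      | exact: hM | exact: entry_le_norm2].
  have n0 := norm2_ge0 u.
  have t0 : 0 < (1 + S)^-1 by rewrite invr_gt0.
  have t1 : (1 + S)^-1 * (1 + S) = 1 by rewrite mulVf ?gt_eqF.
  apply: le_trans (ler_wpM2l (ltW t0) le1) _.
  set t := (1 + S)^-1 in t0 t1 *; set nu := norm2 u in n0 *.
  nra.
case=> d [d0 H].
have ex k : exists z : 'cV[R[i]]_n,
    hatmx A k *m z = hatmx b k /\ forall j, cabs (z j 0) <= d^-1.
  exact: key d0 (H k).
have [f hf] := boolp.choice ex.
exists (\matrix_(j < n, l < 1) fun k => f k j l / (p k)%:C); split.
  move=> j l; exists d^-1 => k; rewrite mxE cabsM cabsV cabs_real gtr0_norm //.
  rewrite mulrCA divff ?gt_eqF // mulr1 (ord1 l).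
  by case: (hf k).
apply/matrixP => i l; rewrite mxE; apply: boolp.funext => k.
rewrite (ord1 l) /wprod.
under eq_bigr do rewrite mxE.
have := congr1 (fun X : 'cV[R[i]]_m => X i 0) (proj1 (hf k)).
rewrite !mxE => <-.
apply: eq_bigr => r _; rewrite !mxE.
rewrite [_ * A i r k]mulrC -mulrA; congr (_ * _).
by rewrite mulrCA divff // mulr1.
Qed.
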